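(* Let $G=(V,E)$ be a finite graph, $A\subset V$, $h\in\mathbb R^V$, $T>0$, and let $(\xi^+,\xi^-),(\zeta^+,\zeta^-)\in(\{-1,1\}^A)^2$ satisfy $\xi^+_v\le\zeta^+_v$ and $\xi^-_v\ge\zeta^-_v$ for all $v\in A$. Then for every increasing event $\mathtt A\subset\Theta^{\bar G}$, $$\bar\mu^{\xi^+/\xi^-}_{G,h}(\mathtt A)\le\bar\mu^{\zeta^+/\zeta^-}_{G,h}(\mathtt A).$$
   Context: Extended Ising model: for a finite graph $G=(V,E)$ let $\bar G=V\cup E$. An extended configuration $\bar\sigma$ assigns $\bar\sigma_v\in\{-1,1\}$ to each $v\in V$ and $\bar\sigma_e\in\{-1,0,1\}$ to each $e\in E$, subject to $|\bar\sigma_v-\bar\sigma_e|\le1$ whenever $v$ is an endpoint of $e$. For $T>0$ and $h\in\mathbb R^V$, $\bar\mu_{G,h}(\bar\sigma)\propto\prod_{e\in E}\prod_{v\in e}W(\bar\sigma_v,\bar\sigma_e)\cdot\exp\big(\frac1T\sum_{v\in V}h_v\bar\sigma_v\big)$, where $W(a,b)=1$ if $b=a$, $t$ if $b=0$, $0$ if $b=-a$, and $t=(e^{2/T}-1)^{-1/2}$. For $A\subset V$ and $\xi\in\{-1,1\}^A$, $\bar\mu^{\xi}_{G,h}$ is $\bar\mu_{G,h}$ conditioned on $\bar\sigma_v=\xi_v$, $v\in A$. $\bar\mu^{\xi^+/\xi^-}_{G,h}=\bar\mu^{\xi^+}_{G,h}\otimes\bar\mu^{\xi^-}_{G,h}$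 is a law on pairs $(\bar\sigma^1,\bar\sigma^2)$, viewed as elements of $\Theta^{\bar G}$, $\Theta=\{-1,0,1\}^2$. Partial order on $\Theta$: $(a,b)\succeq(c,d)$ iff $a\ge c$ and $b\le d$, extended coordinatewise; an event is increasing if it is closed upward under this order. *)

(* Defs.v *)
From HB Require Import structures.
From mathcomp Require Import all_boot all_order all_algebra.
From mathcomp Require Import reals.
From mathcomp Require Import sequences exp.
Set Implicit Arguments. Unset Strict Implicit. Unset Printing Implicit Defensive.
Import Order.TTheory GRing.Theory Num.Theory.
Local Open Scope ring_scope.

Definition simple_graph (V E : finType) (ends : E -> {set V}) : Prop :=
  (forall e, #|ends e| = 2%N) /\ injective ends.

(* The spin value set {-1,0,1}, encoded by 'I_3 : i |-> i - 1. *)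
Definition val3 (i : 'I_3) : int := (i : nat)%:Z - 1.

(* Ḡ = V ⊔ E ; an element of {-1,0,1}^Ḡ. *)
Definition xconfig (V E : finType) := {ffun (V + E)%type -> 'I_3}.

Definition vspin (V E : finType) (s : xconfig V E) (v : V) : int := val3 (s (inl v)).
Definition espin (V E : finType) (s : xconfig V E) (e : E) : int := val3 (s (inr e)).

Definition valid_xconfig (V E : finType) (ends : E -> {set V}) (s : xconfig V E) : bool :=
  [forall v, vspin s v != 0] &&
  [forall e, forall v, (v \in ends e) ==> (`|vspin s v - espin s e| <= 1)].

Section Weights.
Variable R : realType.

Definition tpar (T : R) : R := (Num.sqrt (expR (2 / T) - 1))^-1.

Definition Wfun (T : R) (a b : int) : R :=
  if b == a then 1 else if b == 0 then tpar T else 0.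

Definition xweight (V E : finType) (ends : E -> {set V}) (T : R) (h : V -> R)
    (s : xconfig V E) : R :=
  (valid_xconfig ends s)%:R *
  (\prod_(e : E) \prod_(v in ends e) Wfun T (vspin s v) (espin s e)) *
  expR (T^-1 * \sum_(v : V) h v * (vspin s v)%:~R).

Definition xweight_bc (V E : finType) (ends : E -> {set V}) (T : R) (h : V -> R)
    (A : {set V}) (xi : V -> int) (s : xconfig V E) : R :=
  [forall v in A, vspin s v == xi v]%:R * xweight ends T h s.

Definition xmu (V E : finType) (ends : E -> {set V}) (T : R) (h : V -> R)
    (A : {set V}) (xi : V -> int) (s : xconfig V E) : R :=
  xweight_bc ends T h A xi s / \sum_(s' : xconfig V E) xweight_bc ends T h A xi s'.

(* product measure μ̄^{ξ+/ξ-} of an event on pairs (Θ^Ḡ with Θ = {-1,0,1}^2) *)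
Definition xmu_pair (V E : finType) (ends : E -> {set V}) (T : R) (h : V -> R)
    (A : {set V}) (xip xim : V -> int)
    (Ev : {set (xconfig V E * xconfig V E)}) : R :=
  \sum_(p in Ev) xmu ends T h A xip p.1 * xmu ends T h A xim p.2.
End Weights.

Definition theta_ge (V E : finType) (p q : xconfig V E * xconfig V E) : bool :=
  [forall x, (val3 (q.1 x) <= val3 (p.1 x)) && (val3 (p.2 x) <= val3 (q.2 x))].

Definition increasing_event (V E : finType) (Ev : {set (xconfig V E * xconfig V E)}) : Prop :=
  forall p q, p \in Ev -> theta_ge q p -> q \in Ev.

Definition pm1 (z : int) : Prop := z = 1 \/ z = -1.

(* Main.v *)
Require Import Defs.
From HB Require Import structures.
From mathcomp Require Import all_boot all_order all_algebra.
From mathcomp Require Import reals.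
From mathcomp Require Import sequences exp.
From mathcomp Require Import lra ring.
Set Implicit Arguments. Unset Strict Implicit. Unset Printing Implicit Defensive.
Import Order.TTheory GRing.Theory Num.Theory.
Local Open Scope ring_scope.

Section AD.
Variable R : realFieldType.

Definition AD (T : finType) (jn mt : T -> T -> T) : Prop :=
  forall a b c d : T -> R, (forall x, 0 <= a x) -> (forall x, 0 <= b x) ->
  (forall x, 0 <= c x) -> (forall x, 0 <= d x) ->
  (forall x y, a x * b y <= c (jn x y) * d (mt x y)) ->
  (\sum_x a x) * (\sum_x b x) <= (\sum_x c x) * (\sum_x d x).

Lemma AD_bool : AD orb andb.
Proof.
move=> a b c d a0 b0 c0 d0 H.
rewrite !big_bool /=.
have H00 := H false false; have H11 := H true true.
have H01 := H false true; have H10 := H true false. simpl in *.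
have := a0 true; have := a0 false; have := b0 true; have := b0 false.
have := c0 true; have := c0 false; have := d0 true; have := d0 false.
move: (a true) (a false) (b true) (b false) (c true) (c false) (d true) (d false) H00 H11 H01 H10.
move=> a1 a0' b1 b0' c1 c0' d1 d0' H00 H11 H01 H10 *.
have Hab : a0' * b1 * (a1 * b0') <= (c0' * d0') * (c1 * d1).
  have -> : a0' * b1 * (a1 * b0') = (a0' * b0') * (a1 * b1) by ring.
  by apply: ler_pM => //; apply: mulr_ge0.
have [c10|c10] := eqVneq (c1 * d0') 0.
  have e1 : a0' * b1 = 0 by apply/eqP; rewrite eq_le mulr_ge0 // andbT -c10.
  have e2 : a1 * b0' = 0 by apply/eqP; rewrite eq_le mulr_ge0 // andbT -c10.
  have : 0 <= c0' * d1 by apply: mulr_ge0.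
  nra.
have cpos : 0 < c1 * d0' by rewrite lt0r c10 mulr_ge0.
set A := a0' * b1 in H01 Hab *; set B := a1 * b0' in H10 Hab *.
set C := c1 * d0' in cpos H01 H10 c10 *.
have HD : A * B <= C * (c0' * d1) by rewrite (_ : C * (c0' * d1) = c0' * d0' * (c1 * d1)) /C; [|ring].
have HA : 0 <= A by apply: mulr_ge0.
have HB : 0 <= B by apply: mulr_ge0.
have key : A + B <= C + c0' * d1.
  rewrite -(ler_pM2l cpos).
  have : 0 <= (C - A) * (C - B) by apply: mulr_ge0; lra.
  nra.
have E1 : (a1 + a0') * (b1 + b0') = a0' * b0' + a1 * b1 + (A + B) by rewrite /A /B; ring.
have E2 : (c1 + c0') * (d1 + d0') = c0' * d0' + c1 * d1 + (C + c0' * d1) by rewrite /C; ring.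
rewrite E1 E2; lra.
Qed.

Lemma AD_prod (T1 T2 : finType) (j1 m1 : T1 -> T1 -> T1) (j2 m2 : T2 -> T2 -> T2) :
  AD j1 m1 -> AD j2 m2 ->
  AD (fun x y : T1 * T2 => (j1 x.1 y.1, j2 x.2 y.2)) (fun x y => (m1 x.1 y.1, m2 x.2 y.2)).
Proof.
move=> H1 H2 a b c d a0 b0 c0 d0 H.
have E (F : T1 * T2 -> R) : \sum_p F p = \sum_x1 \sum_x2 F (x1, x2).
  by rewrite pair_bigA; apply: eq_bigr => -[].
rewrite !E.
apply: (H1 (fun x1 => \sum_x2 a (x1, x2)) (fun x1 => \sum_x2 b (x1, x2))
            (fun x1 => \sum_x2 c (x1, x2)) (fun x1 => \sum_x2 d (x1, x2))).
- by move=> x; apply: sumr_ge0.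
- by move=> x; apply: sumr_ge0.
- by move=> x; apply: sumr_ge0.
- by move=> x; apply: sumr_ge0.
move=> x1 y1.
apply: (H2 (fun x2 => a (x1, x2)) (fun x2 => b (y1, x2))
           (fun x2 => c (j1 x1 y1, x2)) (fun x2 => d (m1 x1 y1, x2))) => //.
 
Qed.

Lemma sum_inj (S T : finType) (f : S -> T) (g : S -> R) s :
  injective f -> \sum_(s' | f s' == f s) g s' = g s.
Proof.
move=> fi; apply: big_pred1 => s' /=; apply/eqP/eqP; [exact: fi| by move->].
Qed.

Lemma sum_part (S T : finType) (f : S -> T) (g : S -> R) :
  \sum_t \sum_(s | f s == t) g s = \sum_s g s.
Proof.
by rewrite (partition_big f xpredT) //=.
Qed.

Lemma AD_sub (S T : finType) (jS mS : S -> S -> S) (jT mT : T -> T -> T) (f : S -> T) :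
  injective f -> (forall x y, f (jS x y) = jT (f x) (f y)) ->
  (forall x y, f (mS x y) = mT (f x) (f y)) ->
  AD jT mT -> AD jS mS.
Proof.
move=> fi fj fm HT a b c d a0 b0 c0 d0 H.
rewrite -!(sum_part f).
apply: HT; try by move=> x; apply: sumr_ge0.
move=> x y.
have [s /eqP <-|nx] := pickP (fun s => f s == x); last first.
  rewrite (big_pred0 _ _ _ _ nx) mul0r; apply: mulr_ge0; apply: sumr_ge0 => *; auto.
have [s' /eqP <-|ny] := pickP (fun s => f s == y); last first.
  rewrite (big_pred0 _ _ _ _ ny) mulr0; apply: mulr_ge0; apply: sumr_ge0 => *; auto.
by rewrite -fj -fm !sum_inj.
Qed.

Section FF.
Variables (I T : finType) (jn mt : T -> T -> T).

Definition fop (op : T -> T -> T) (x y : {ffun I -> T}) : {ffun I -> T} :=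
  [ffun i => op (x i) (y i)].
Definition Cset (S : {set I}) (z : {ffun I -> T}) : pred {ffun I -> T} :=
  fun x => [forall i, (i \notin S) ==> (x i == z i)].
Definition upd (z : {ffun I -> T}) i t : {ffun I -> T} :=
  [ffun j => if j == i then t else z j].

Lemma Cset_upd (S : {set I}) (i : I) (z : {ffun I -> T}) (t : T) (x : {ffun I -> T}) : i \notin S ->
  Cset S (upd z i t) x = (t == x i) && Cset (i |: S) z x.
Proof.
move=> iS; apply/idP/idP.
  move/forallP=> H; apply/andP; split.
    by have := H i; rewrite iS /= ffunE eqxx eq_sym.
  apply/forallP=> j; apply/implyP; rewrite in_setU1 negb_or => /andP[ji jS].
  by have := H j; rewrite jS /= ffunE (negbTE ji).
case/andP=> /eqP -> /forallP H; apply/forallP=> j; apply/implyP=> jS.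
rewrite ffunE; case: (j =P i) => [->//|/eqP ji].
by have := H j; rewrite in_setU1 negb_or ji jS.
Qed.

Lemma sum_split (S : {set I}) (i : I) (z : {ffun I -> T}) (F : {ffun I -> T} -> R) : i \notin S ->
  \sum_(x | Cset (i |: S) z x) F x = \sum_t \sum_(x | Cset S (upd z i t) x) F x.
Proof.
move=> iS.
under [RHS]eq_bigr do rewrite big_mkcond.
rewrite exchange_big big_mkcond /=; apply: eq_bigr => x _.
under eq_bigr do rewrite Cset_upd //.
case: (Cset (i |: S) z x).
  by rewrite -big_mkcond /= (big_pred1 (x i)) // => t; rewrite /= andbT.
by rewrite big1 // => t _; rewrite andbF.
Qed.

Lemma upd_op op (z1 z2 : {ffun I -> T}) (i : I) (t u : T) : fop op (upd z1 i t) (upd z2 i u) = upd (fop op z1 z2) i (op t u).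
Proof. by apply/ffunP=> j; rewrite !ffunE; case: eqP. Qed.

Lemma AD_ffun (t0 : T) : AD jn mt -> AD (fop jn) (fop mt).
Proof.
move=> HT a b c d a0 b0 c0 d0 H.
have claim : forall n (S : {set I}), #|S| = n -> forall z1 z2 : {ffun I -> T},
  (\sum_(x | Cset S z1 x) a x) * (\sum_(y | Cset S z2 y) b y) <=
  (\sum_(x | Cset S (fop jn z1 z2) x) c x) * (\sum_(x | Cset S (fop mt z1 z2) x) d x).
  elim=> [|n IH] S.
    move/eqP; rewrite cards_eq0 => /eqP -> z1 z2.
    have P0 z : Cset set0 z =1 pred1 z.
      move=> x; rewrite /Cset /=; apply/forallP/eqP => [Hx|-> i]; last by rewrite eqxx implybT.
      by apply/ffunP=> i; have := Hx i; rewrite in_set0 /= => /eqP.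
    by rewrite (big_pred1 z1 (P0 z1)) (big_pred1 z2 (P0 z2)) (big_pred1 _ (P0 (fop jn z1 z2))) (big_pred1 _ (P0 (fop mt z1 z2))).
  move=> cS z1 z2.
  have : (0 < #|S|)%N by rewrite cS.
  rewrite card_gt0 => /set0Pn [i iS].
  rewrite -(setD1K iS) !sum_split ?setD11 //.
  apply: HT; try by move=> x; apply: sumr_ge0.
  move=> t u; rewrite -!upd_op; apply: IH.
  by move: cS; rewrite (cardsD1 i S) iS add1n => -[].
have Pt z (F : {ffun I -> T} -> R) : \sum_(x | Cset setT z x) F x = \sum_x F x.
  by apply: eq_bigl => x; apply/forallP=> i; rewrite in_setT.
pose z0 : {ffun I -> T} := [ffun=> t0].
rewrite -(Pt z0 a) -(Pt z0 b) -(Pt (fop jn z0 z0) c) -(Pt (fop mt z0 z0) d).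
exact: claim.
Qed.
End FF.
End AD.

Definition jn3 (i k : 'I_3) : 'I_3 := if (i <= k)%N then k else i.
Definition mt3 (i k : 'I_3) : 'I_3 := if (i <= k)%N then i else k.

Definition emb3 (i : 'I_3) : bool * bool := ((0 < i)%N, (1 < i)%N).

Lemma AD3 (R : realFieldType) : AD R jn3 mt3.
Proof.
apply: (@AD_sub R _ _ _ _ (fun x y : bool * bool => (x.1 || y.1, x.2 || y.2))
   (fun x y : bool * bool => (x.1 && y.1, x.2 && y.2)) emb3).
- move=> [[|[|[|//]]] ?] [[|[|[|//]]] ?] H; apply/val_inj => //=; move: H; rewrite /emb3 /=; congruence.
- by move=> [[|[|[|//]]] ?] [[|[|[|//]]] ?].
- by move=> [[|[|[|//]]] ?] [[|[|[|//]]] ?].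
apply: AD_prod; exact: AD_bool.
Qed.

Lemma W_holley (R : realType) (T : R) (a b c d : 'I_3) : 0 <= tpar T ->
  Wfun T (val3 a) (val3 b) * Wfun T (val3 c) (val3 d) <=
  Wfun T (val3 (jn3 a c)) (val3 (jn3 b d)) * Wfun T (val3 (mt3 a c)) (val3 (mt3 b d)).
Proof.
rewrite /Wfun; move: (tpar T) => t ht.
case: a => [[|[|[|//]]] ?]; case: b => [[|[|[|//]]] ?];
case: c => [[|[|[|//]]] ?]; case: d => [[|[|[|//]]] ?];
  rewrite /jn3 /mt3 /val3 /= ?mulr1 ?mul1r ?mulr0 ?mul0r //.
all: try lra. all: nra.
Qed.

Lemma valid3 (a b c d : 'I_3) : `|val3 a - val3 b| <= 1 -> `|val3 c - val3 d| <= 1 ->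
  `|val3 (jn3 a c) - val3 (jn3 b d)| <= 1 /\ `|val3 (mt3 a c) - val3 (mt3 b d)| <= 1.
Proof.
case: a => [[|[|[|//]]] ?]; case: b => [[|[|[|//]]] ?];
case: c => [[|[|[|//]]] ?]; case: d => [[|[|[|//]]] ?]; by [].
Qed.

Lemma jn3_or a b : jn3 a b = a \/ jn3 a b = b.
Proof. by rewrite /jn3; case: ifP; auto. Qed.
Lemma mt3_or a b : mt3 a b = a \/ mt3 a b = b.
Proof. by rewrite /mt3; case: ifP; auto. Qed.
Lemma val3_jm a b : val3 (jn3 a b) + val3 (mt3 a b) = val3 a + val3 b.
Proof. by case: a => [[|[|[|//]]] ?]; case: b => [[|[|[|//]]] ?]. Qed.
Lemma jn3_le a b : val3 a <= val3 b -> val3 (jn3 a b) = val3 b /\ val3 (mt3 a b) = val3 a.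
Proof. by case: a => [[|[|[|//]]] ?]; case: b => [[|[|[|//]]] ?]. Qed.
Lemma jn3_ge a b : val3 a <= val3 (jn3 a b).
Proof. by case: a => [[|[|[|//]]] ?]; case: b => [[|[|[|//]]] ?]. Qed.
Lemma mt3_le a b : val3 (mt3 a b) <= val3 a.
Proof. by case: a => [[|[|[|//]]] ?]; case: b => [[|[|[|//]]] ?]. Qed.
Lemma jn3C a b : jn3 a b = jn3 b a.
Proof. by apply/val_inj; case: a => [[|[|[|//]]] ?]; case: b => [[|[|[|//]]] ?]. Qed.
Lemma mt3C a b : mt3 a b = mt3 b a.
Proof. by apply/val_inj; case: a => [[|[|[|//]]] ?]; case: b => [[|[|[|//]]] ?]. Qed.

Section Model.
Variables (R : realType) (V E : finType) (ends : E -> {set V}) (T : R) (h : V -> R) (A : {set V}).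
Hypothesis T0 : 0 < T.

Local Notation cfg := (xconfig V E).
Local Notation w := (xweight_bc ends T h A).

Definition bcb (xi : V -> int) (s : cfg) := [forall v in A, vspin s v == xi v].
Definition Pw (s : cfg) := \prod_(e : E) \prod_(v in ends e) Wfun T (vspin s v) (espin s e).
Definition Xw (s : cfg) := expR (T^-1 * \sum_(v : V) h v * (vspin s v)%:~R).

Lemma wE xi s : w xi s = (bcb xi s)%:R * (valid_xconfig ends s)%:R * (Pw s * Xw s).
Proof. by rewrite /xweight_bc /xweight /bcb /Pw /Xw !mulrA. Qed.

Lemma tpar_gt0 : 0 < tpar T.
Proof.
rewrite /tpar invr_gt0 sqrtr_gt0 subr_gt0 expR_gt1.
by apply: divr_gt0.
Qed.

Lemma Wfun_ge0 a b : 0 <= Wfun T a b.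
Proof. rewrite /Wfun; case: ifP => _ //; case: ifP => _ //; exact: ltW tpar_gt0. Qed.

Lemma Pw_ge0 s : 0 <= Pw s.
Proof. by apply: prodr_ge0 => e _; apply: prodr_ge0 => v _; apply: Wfun_ge0. Qed.

Lemma w_ge0 xi s : 0 <= w xi s.
Proof.
rewrite wE; apply: mulr_ge0; first by apply: mulr_ge0; apply: ler0n.
apply: mulr_ge0; [exact: Pw_ge0 | exact: ltW (expR_gt0 _)].
Qed.

Definition cj (x y : cfg) : cfg := fop jn3 x y.
Definition cm (x y : cfg) : cfg := fop mt3 x y.

Lemma valid_jm x y : valid_xconfig ends x -> valid_xconfig ends y ->
  valid_xconfig ends (cj x y) && valid_xconfig ends (cm x y).
Proof.
move=> /andP[/forallP vx /forallP ex] /andP[/forallP vy /forallP ey].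
apply/andP; split; apply/andP; split.
- apply/forallP=> v; rewrite /vspin ffunE.
  by case: (jn3_or (x (inl v)) (y (inl v))) => ->; [exact: vx|exact: vy].
- apply/forallP=> e; apply/forallP=> v; apply/implyP=> ve.
  have := implyP (forallP (ex e) v) ve; have := implyP (forallP (ey e) v) ve.
  rewrite /vspin /espin !ffunE => H2 H1.
  by case: (valid3 H1 H2).
- apply/forallP=> v; rewrite /vspin ffunE.
  by case: (mt3_or (x (inl v)) (y (inl v))) => ->; [exact: vx|exact: vy].
- apply/forallP=> e; apply/forallP=> v; apply/implyP=> ve.
  have := implyP (forallP (ex e) v) ve; have := implyP (forallP (ey e) v) ve.
  rewrite /vspin /espin !ffunE => H2 H1.
  by case: (valid3 H1 H2).
Qed.

Lemma bc_jm xi ze x y : (forall v, v \in A -> xi v <= ze v) ->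
  bcb xi x -> bcb ze y -> bcb ze (cj x y) && bcb xi (cm x y).
Proof.
move=> le /forallP bx /forallP bY; apply/andP; split; apply/forallP=> v;
  apply/implyP=> vA; have /eqP ex := implyP (bx v) vA; have /eqP ey := implyP (bY v) vA;
  rewrite /vspin ffunE; move: ex ey; rewrite /vspin => ex ey;
  (have hle : val3 (x (inl v)) <= val3 (y (inl v)) by rewrite ex ey; exact: le).
- by have [-> _] := jn3_le hle; rewrite ey.
- by have [_ ->] := jn3_le hle; rewrite ex.
Qed.

Lemma Pw_holley x y : Pw x * Pw y <= Pw (cj x y) * Pw (cm x y).
Proof.
rewrite /Pw -!big_split /=; apply: ler_prod => e _; apply/andP; split.
  by apply: mulr_ge0; apply: prodr_ge0 => v _; apply: Wfun_ge0.
rewrite -!big_split /=; apply: ler_prod => v _; apply/andP; split.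
  by apply: mulr_ge0; apply: Wfun_ge0.
rewrite /vspin /espin !ffunE; apply: W_holley; exact: ltW tpar_gt0.
Qed.

Lemma Xw_eq x y : Xw x * Xw y = Xw (cj x y) * Xw (cm x y).
Proof.
rewrite /Xw -!expRD -!mulrDr -!big_split /=; congr (expR (_ * _)).
apply: eq_bigr => v _; rewrite /vspin !ffunE -!mulrDr -!intrD val3_jm.
done.
Qed.

Lemma holley xi ze x y : (forall v, v \in A -> xi v <= ze v) ->
  w xi x * w ze y <= w ze (cj x y) * w xi (cm x y).
Proof.
move=> le.
have [/and4P[b1 b2 v1 v2]|] := boolP [&& bcb xi x, bcb ze y, valid_xconfig ends x & valid_xconfig ends y].
  have /andP[b3 b4] := bc_jm le b1 b2.
  have /andP[v3 v4] := valid_jm v1 v2.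
  rewrite !wE b1 b2 v1 v2 b3 b4 v3 v4 !mul1r.
  have -> : Pw x * Xw x * (Pw y * Xw y) = (Pw x * Pw y) * (Xw x * Xw y) by ring.
  have -> : Pw (cj x y) * Xw (cj x y) * (Pw (cm x y) * Xw (cm x y)) =
     (Pw (cj x y) * Pw (cm x y)) * (Xw (cj x y) * Xw (cm x y)) by ring.
  rewrite Xw_eq; apply: ler_wpM2r; last exact: Pw_holley.
  by apply: mulr_ge0; exact: ltW (expR_gt0 _).
move=> H.
have -> : w xi x * w ze y = 0.
  rewrite !wE; move: H.
  by case: (bcb xi x); case: (bcb ze y); case: (valid_xconfig ends x);
     case: (valid_xconfig ends y) => //= _; rewrite ?(mul0r, mulr0).
by apply: mulr_ge0; apply: w_ge0.
Qed.


Lemma Z_gt0 xi : (forall v, v \in A -> pm1 (xi v)) -> 0 < \sum_s w xi s.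
Proof.
move=> pm.
pose s0 : cfg := [ffun z : V + E => match z with
   | inl v => if (v \in A) && (xi v == -1) then ord0 else ord_max
   | inr _ => inord 1 end].
have vs v : vspin s0 v = if (v \in A) && (xi v == -1) then -1 else 1.
  by rewrite /vspin ffunE; case: ifP.
have es e : espin s0 e = 0 by rewrite /espin ffunE /val3 inordK.
have vs1 v : `|vspin s0 v| = 1 by rewrite vs; case: ifP.
have vs0 v : vspin s0 v != 0 by rewrite vs; case: ifP.
have pos : 0 < w xi s0.
  rewrite wE.
  have -> : bcb xi s0.
    apply/forallP=> v; apply/implyP=> vA; rewrite vs vA /=.
    by case: (pm v vA) => ->.
  have -> : valid_xconfig ends s0.
    apply/andP; split; apply/forallP => v //.
    by apply/forallP=> u; apply/implyP=> _; rewrite es subr0 vs1.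
  rewrite !mul1r; apply: mulr_gt0; last exact: expR_gt0.
  apply: prodr_gt0 => e _; apply: prodr_gt0 => v _.
  rewrite /Wfun es eq_sym (negbTE (vs0 v)) eqxx; exact: tpar_gt0.
rewrite (bigD1 s0) //=.
have : 0 <= \sum_(i | i != s0) w xi i by apply: sumr_ge0 => i _; apply: w_ge0.
lra.
Qed.

Lemma mul3_le (a b c d e g : R) : 0 <= a -> 0 <= b * c -> a <= d -> b * c <= e * g ->
  a * b * c <= d * e * g.
Proof. by move=> *; rewrite -!mulrA; apply: ler_pM. Qed.

Lemma mul3_le' (a b c d e g : R) : 0 <= a -> 0 <= c * b -> a <= g -> c * b <= d * e ->
  a * b * c <= d * (g * e).
Proof.
move=> *; have -> : a * b * c = a * (c * b) by ring.
have -> : d * (g * e) = g * (d * e) by ring.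
by apply: ler_pM.
Qed.

Lemma sum_xmu xi (f : cfg -> R) :
  \sum_x f x * xmu ends T h A xi x = (\sum_x f x * w xi x) / \sum_s w xi s.
Proof. by rewrite /xmu mulr_suml; apply: eq_bigr => x _; rewrite mulrA. Qed.

Lemma AD_cfg : AD R (@fop (V + E)%type _ jn3) (fop mt3).
Proof. exact (@AD_ffun R (V + E)%type _ jn3 mt3 ord0 (@AD3 R)). Qed.

Lemma mono_inc xi ze (f : cfg -> R) :
  (forall v, v \in A -> pm1 (xi v)) -> (forall v, v \in A -> pm1 (ze v)) ->
  (forall v, v \in A -> xi v <= ze v) -> (forall x, 0 <= f x) ->
  (forall x y : cfg, (forall z, val3 (x z) <= val3 (y z)) -> f x <= f y) ->
  \sum_x f x * xmu ends T h A xi x <= \sum_x f x * xmu ends T h A ze x.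
Proof.
move=> p1 p2 le f0 fi.
rewrite !sum_xmu.
have Z1 := Z_gt0 p1; have Z2 := Z_gt0 p2.
have key := @AD_cfg (fun x => f x * w xi x) (w ze) (fun x => f x * w ze x) (w xi).
have {}key : (\sum_x f x * w xi x) * (\sum_s w ze s) <= (\sum_x f x * w ze x) * (\sum_s w xi s).
  apply: key.
  - by move=> x; apply: mulr_ge0; [exact: f0|exact: w_ge0].
  - by move=> x; apply: w_ge0.
  - by move=> x; apply: mulr_ge0; [exact: f0|exact: w_ge0].
  - by move=> x; apply: w_ge0.
  move=> x y /=; apply: mul3_le.
  - exact: f0.
  - by apply: mulr_ge0; apply: w_ge0.
  - by apply: fi => z; rewrite ffunE; apply: jn3_ge.
  - exact: holley.
by rewrite ler_pdivlMr // mulrAC ler_pdivrMr.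
Qed.

Lemma mono_dec xi ze (f : cfg -> R) :
  (forall v, v \in A -> pm1 (xi v)) -> (forall v, v \in A -> pm1 (ze v)) ->
  (forall v, v \in A -> xi v <= ze v) -> (forall x, 0 <= f x) ->
  (forall x y : cfg, (forall z, val3 (x z) <= val3 (y z)) -> f y <= f x) ->
  \sum_x f x * xmu ends T h A ze x <= \sum_x f x * xmu ends T h A xi x.
Proof.
move=> p1 p2 le f0 fd.
rewrite !sum_xmu.
have Z1 := Z_gt0 p1; have Z2 := Z_gt0 p2.
have key := @AD_cfg (fun x => f x * w ze x) (w xi) (w ze) (fun x => f x * w xi x).
have {}key : (\sum_x f x * w ze x) * (\sum_s w xi s) <= (\sum_s w ze s) * (\sum_x f x * w xi x).
  apply: key.
  - by move=> x; apply: mulr_ge0; [exact: f0|exact: w_ge0].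
  - by move=> x; apply: w_ge0.
  - by move=> x; apply: w_ge0.
  - by move=> x; apply: mulr_ge0; [exact: f0|exact: w_ge0].
  move=> x y.
  apply: mul3_le'.
  - exact: f0.
  - by apply: mulr_ge0; apply: w_ge0.
  - by apply: fd => z; rewrite ffunE; apply: mt3_le.
  have -> : fop jn3 x y = cj y x by apply/ffunP => z; rewrite !ffunE jn3C.
  have -> : fop mt3 x y = cm y x by apply/ffunP => z; rewrite !ffunE mt3C.
  exact: holley.
rewrite ler_pdivlMr // mulrAC ler_pdivrMr //.
by apply: (le_trans key); rewrite mulrC.
Qed.

End Model.

Unset Implicit Arguments.

Theorem lemma2p4 (R : realType) (V E : finType) (ends : E -> {set V})
  (A : {set V}) (h : V -> R) (T : R)
  (xip xim zetap zetam : V -> int) (Ev : {set (xconfig V E * xconfig V E)}) :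
  simple_graph ends -> 0 < T ->
  (forall v, v \in A -> [/\ pm1 (xip v), pm1 (xim v), pm1 (zetap v) & pm1 (zetam v)]) ->
  (forall v, v \in A -> xip v <= zetap v /\ zetam v <= xim v) ->
  increasing_event Ev ->
  xmu_pair ends T h A xip xim Ev <= xmu_pair ends T h A zetap zetam Ev.
Proof.
move=> _ T0 pm le inc.
have q1 v (vA : v \in A) : pm1 (xip v) by case: (pm v vA).
have q2 v (vA : v \in A) : pm1 (xim v) by case: (pm v vA).
have q3 v (vA : v \in A) : pm1 (zetap v) by case: (pm v vA).
have q4 v (vA : v \in A) : pm1 (zetam v) by case: (pm v vA).
have l1 v (vA : v \in A) : xip v <= zetap v by case: (le v vA).
have l2 v (vA : v \in A) : zetam v <= xim v by case: (le v vA).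
pose mu := xmu ends T h A.
have mu0 xi s : 0 <= mu xi s.
  by rewrite /mu /xmu; apply: divr_ge0; [apply: w_ge0 | apply: sumr_ge0 => *; apply: w_ge0].
pose ev (a b : xconfig V E) : R := ((a, b) \in Ev)%:R.
have ev0 a b : 0 <= ev a b by apply: ler0n.
have E1 (m1 m2 : V -> int) : xmu_pair ends T h A m1 m2 Ev =
    \sum_p2 mu m2 p2 * \sum_p1 ev p1 p2 * mu m1 p1.
  rewrite /xmu_pair big_mkcond.
  have -> : \sum_(p : xconfig V E * xconfig V E)
     (if p \in Ev then xmu ends T h A m1 p.1 * xmu ends T h A m2 p.2 else 0) =
     \sum_p1 \sum_p2 ev p1 p2 * mu m1 p1 * mu m2 p2.
    rewrite pair_bigA; apply: eq_bigr => -[a b] _ /=.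
    by rewrite /ev; case: ((a, b) \in Ev); rewrite ?mul1r ?mul0r.
  rewrite [LHS]exchange_big; apply: eq_bigr => p2 _; rewrite mulr_sumr.
  by apply: eq_bigr => p1 _; ring.
have E2 (m1 m2 : V -> int) : xmu_pair ends T h A m1 m2 Ev =
    \sum_p1 mu m1 p1 * \sum_p2 ev p1 p2 * mu m2 p2.
  rewrite /xmu_pair big_mkcond.
  have -> : \sum_(p : xconfig V E * xconfig V E)
     (if p \in Ev then xmu ends T h A m1 p.1 * xmu ends T h A m2 p.2 else 0) =
     \sum_p1 \sum_p2 ev p1 p2 * mu m1 p1 * mu m2 p2.
    rewrite pair_bigA; apply: eq_bigr => -[a b] _ /=.
    by rewrite /ev; case: ((a, b) \in Ev); rewrite ?mul1r ?mul0r.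
  apply: eq_bigr => p1 _; rewrite mulr_sumr.
  by apply: eq_bigr => p2 _; ring.
apply: (@le_trans _ _ (xmu_pair ends T h A zetap xim Ev)).
  rewrite !E1; apply: ler_sum => p2 _; apply: ler_wpM2l; first exact: mu0.
  apply: (@mono_inc R V E ends T h A T0 xip zetap (fun p1 => ev p1 p2)) => //.
  move=> x y H; rewrite /ev; case Hx: ((x, p2) \in Ev); last exact: ler0n.
  rewrite (inc _ _ Hx) //; apply/forallP => z /=; by rewrite H lexx.
rewrite !E2; apply: ler_sum => p1 _; apply: ler_wpM2l; first exact: mu0.
apply: (@mono_dec R V E ends T h A T0 zetam xim (fun p2 => ev p1 p2)) => //.
move=> x y H; rewrite /ev; case Hy: ((p1, y) \in Ev); last exact: ler0n.
rewrite (inc _ _ Hy) //; apply/forallP => z /=; by rewrite H lexx.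
Qed.
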